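(* Let $d \geq 2$. For all $n \geq 0$ and all $i,j \in [0,d-1]$, $$a_{j,d}(a_{i,d}(n)) = d\,a_{i,d}(n) + \overline{(j-i)}_d = \begin{cases} d\,a_{i,d}(n) + j - i & \text{if } j \geq i,\\ d\,a_{i,d}(n) + d + j - i & \text{if } j < i.\end{cases}$$
   Context: Let $d \geq 2$ be an integer. For an integer $x$, $\overline{(x)}_d$ denotes the unique integer in $[0,d-1]$ congruent to $x$ modulo $d$. For $n \geq 0$, $s_d(n)$ denotes the sum of the base-$d$ digits of $n$. For $j \in [0,d-1]$, $(a_{j,d}(n))_{n\geq 0}$ is the strictly increasing enumeration (indexed from $n=0$) of all nonnegative integers $k$ with $s_d(k) \equiv j \pmod d$. *)

(* Defs.v *)
From mathcomp Require Import all_boot.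
Set Implicit Arguments. Unset Strict Implicit. Unset Printing Implicit Defensive.

(* sum of base-d digits of n (d >= 2); fuel n suffices since n decreases *)
Fixpoint sdigits_aux (fuel d n : nat) : nat :=
  match fuel with
  | 0 => 0
  | fuel'.+1 => if n is 0 then 0 else n %% d + sdigits_aux fuel' d (n %/ d)
  end.
Definition s_d (d n : nat) : nat := sdigits_aux n.+1 d n.

Definition in_class (j d k : nat) : bool := s_d d k == j %[mod d].

(* a_{j,d}(n): the n-th (from 0) element, in increasing order, of
   {k | s_d(k) = j mod d}.  Each block [m*d, m*d+d) contains exactly one such
   k, so the first n+1 of them all lie below d*(n+1); hence the n-th element of
   the increasing enumeration equals the n-th element of the filtered list below. *)
Definition a_jd (j d n : nat) : nat :=
  nth 0 [seq k <- iota 0 (d * n.+1) | in_class j d k] n.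

(* \overline{(x)}_d for an integer x = j - i with i,j in [0,d-1]: (j + d - i) mod d *)
Definition resid_diff (d j i : nat) : nat := (j + d - i) %% d.

(* Main.v *)
Require Import Defs.
From mathcomp Require Import all_boot.
From mathcomp Require Import zify.

Lemma aux_fuel d (hd : 1 < d) : forall f1 f2 n, n < f1 -> n < f2 ->
  sdigits_aux f1 d n = sdigits_aux f2 d n.
Proof.
elim=> [|f1 IH] [|f2] n //= h1 h2.
case: n h1 h2 => [|n] //= h1 h2.
have hlt : n.+1 %/ d < n.+1 by apply: ltn_Pdiv.
by rewrite (IH f2) //; lia.
Qed.

Lemma aux_S f d n : sdigits_aux f.+1 d n = if n is 0 then 0 else n %% d + sdigits_aux f d (n %/ d).
Proof. by []. Qed.

Lemma s_block d (hd : 1 < d) m r : r < d -> s_d d (d * m + r) = s_d d m + r.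
Proof.
move=> hr; rewrite /s_d.
case E: (d * m + r) => [|k].
  have -> : m = 0 by nia.
  have -> : r = 0 by lia.
  by [].
rewrite aux_S -E.
have -> : (d * m + r) %% d = r by rewrite mulnC modnMDl modn_small.
have -> : (d * m + r) %/ d = m by rewrite mulnC divnMDl ?(ltnW hd) // divn_small // addn0.
rewrite addnC; congr (_ + _); apply: aux_fuel => //.
nia.
Qed.

Definition cc j d m := (j + d - s_d d m %% d) %% d.

Lemma in_block d (hd : 1 < d) j (hj : j < d) m r : r < d ->
  in_class j d (d * m + r) = (r == cc j d m).
Proof.
move=> hr; rewrite /in_class s_block // /cc (modn_small hj).
have ht : s_d d m %% d < d by rewrite ltn_mod; lia.
rewrite -modnDml.
move: (s_d d m %% d) ht => t ht.
case: (ltnP (t + r) d) => h1.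
- rewrite (modn_small h1).
  case: (leqP t j) => h2.
  + have -> : (j + d - t) %% d = j - t.
      have -> : j + d - t = 1 * d + (j - t) by lia.
      by rewrite modnMDl modn_small //; lia.
    apply/eqP/eqP; lia.
  + rewrite (modn_small (_ : j + d - t < d)); last by lia.
    apply/eqP/eqP; lia.
- have -> : (t + r) %% d = t + r - d.
    have -> : t + r = 1 * d + (t + r - d) by lia.
    rewrite modnMDl modn_small //; lia.
  case: (leqP t j) => h2.
  + have -> : (j + d - t) %% d = j - t.
      have -> : j + d - t = 1 * d + (j - t) by lia.
      by rewrite modnMDl modn_small //; lia.
    apply/eqP/eqP; lia.
  + rewrite (modn_small (_ : j + d - t < d)); last by lia.
    apply/eqP/eqP; lia.
Qed.

Lemma cc_lt j d m : 0 < d -> cc j d m < d.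
Proof. by move=> hd; rewrite /cc ltn_mod. Qed.

Lemma filter_block d (hd : 1 < d) j (hj : j < d) m :
  [seq k <- iota (d * m) d | in_class j d k] = [:: d * m + cc j d m].
Proof.
rewrite -[d * m]addn0 iotaDl addn0 filter_map.
rewrite (@eq_in_filter _ _ (pred1 (cc j d m))); last first.
  by move=> r; rewrite mem_iota add0n => hr; rewrite /= in_block.
rewrite filter_pred1_uniq ?iota_uniq // mem_iota add0n cc_lt //; lia.
Qed.

Lemma filter_all d (hd : 1 < d) j (hj : j < d) N :
  [seq k <- iota 0 (d * N) | in_class j d k] =
  [seq d * m + cc j d m | m <- iota 0 N].
Proof.
elim: N => [|N IH]; first by rewrite muln0.
rewrite mulnS addnC iotaD add0n filter_cat IH filter_block //.
by rewrite -addn1 iotaD add0n map_cat.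
Qed.

Lemma a_formula d (hd : 1 < d) j (hj : j < d) n :
  a_jd j d n = d * n + cc j d n.
Proof.
rewrite /a_jd filter_all // (nth_map 0); last by rewrite size_iota.
by rewrite nth_iota.
Qed.

Theorem theorem1 (d : nat) (hd : 2 <= d) (n i j : nat) (hi : i < d) (hj : j < d) :
  a_jd j d (a_jd i d n) = d * a_jd i d n + resid_diff d j i /\
  a_jd j d (a_jd i d n) =
    (if i <= j then d * a_jd i d n + j - i else d * a_jd i d n + d + j - i).
Proof.
have key : a_jd j d (a_jd i d n) = d * a_jd i d n + resid_diff d j i.
  rewrite (a_formula d hd j hj) /cc /resid_diff.
  have : in_class i d (a_jd i d n).
    by rewrite a_formula // in_block // cc_lt //; lia.
  by rewrite /in_class (modn_small hi) => /eqP ->.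
split=> //; rewrite key /resid_diff.
case: (leqP i j) => h.
- have -> : j + d - i = 1 * d + (j - i) by lia.
  rewrite modnMDl modn_small; lia.
- rewrite modn_small; lia.
Qed.
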